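(* Let $b\ge1$ and let $q=(q_1,q_2,\ldots,q_k)$ be an ordered partition of $b$ (so $k\ge 1$). The number of ways $q$ can be embedded into an ordered partition of $b$ (counting all nontrivial embeddings of $q$ into all ordered partitions $r$ of $b$, plus the one trivial embedding of $q$ into itself) is \[ 1+\frac{q_1+2k-2}{q_1+k-1}\binom{q_1+k-1}{k-1}2^{q_1-1}. \] Equivalently, this is the number of cards for $b$ balls whose left partition is $q$.
   Context: For an integer $b\ge 0$, an ordered partition of $b$ is a finite sequence $(q_1,\ldots,q_k)$ of positive integers summing to $b$ (for $b=0$ the only one is the empty sequence). An ordered partition $(q_1,\ldots,q_k)$ with $k\ge1$ is nontrivially embedded into an ordered partition $(r_1,\ldots,r_\ell)$ by a choice of indices $1\le i_2<i_3<\cdots<i_k\le \ell$ with $q_j\le r_{i_j}$ for $2\le j\le k$; different index tuples count as different embeddings. The trivial embedding of $q$ into $r$ exists only when $q=r$. A card for $b$ balls is either (i) a trivial card, given by an ordered partition $q$ of $b$, whose left and right partitions are both $q$; or (ii) a throw card, given by ordered partitions $q=(q_1,\ldots,q_k)$ ($k\ge1$) and $r=(r_1,\ldots,r_\ell)$ of $b$ together with a nontrivial embedding $(i_2,\ldots,i_k)$ of $q$ into $r$; its left partition is $q$ and its right partition is $r$. Different index tuples give different cards, and a throw card is distinct from the trivial card even when $q=r$. *)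

(* Defs.v *)
From mathcomp Require Import all_boot all_order all_algebra.
Set Implicit Arguments. Unset Strict Implicit. Unset Printing Implicit Defensive.

Definition is_opart (b : nat) (r : seq nat) : bool :=
  all (fun x => 0 < x) r && (sumn r == b).

Fixpoint nseqs (n : nat) (s : seq nat) : seq (seq nat) :=
  if n is n'.+1 then [seq x :: t | x <- s, t <- nseqs n' s] else [:: [::]].

(* All sequences of length <= b with entries in {0..b}; every ordered partition
   of b occurs exactly once among them. *)
Definition bounded_seqs (b : nat) : seq (seq nat) :=
  flatten [seq nseqs n (iota 0 b.+1) | n <- iota 0 b.+1].

Definition oparts (b : nat) : seq (seq nat) :=
  [seq r <- bounded_seqs b | is_opart b r].

(* Nontrivial embeddings of q = (q_1, q_2, ..., q_k) into r = (r_1, ..., r_l):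
   index tuples (i_2 < ... < i_k) of indices of r with q_j <= r_{i_j}.
   Indices are 0-based here: the tuple t has entries in 'I_(size r), and
   tnth t j corresponds to i_{j+2}, matched with q_{j+2} = nth 0 (behead q) j. *)
Definition nt_embeddings (q r : seq nat) : {set (size (behead q)).-tuple 'I_(size r)} :=
  [set t : (size (behead q)).-tuple 'I_(size r) |
     sorted ltn (map val t) &&
     [forall j : 'I_(size (behead q)), nth 0 (behead q) j <= nth 0 r (tnth t j)]].

Definition num_embeddings (b : nat) (q : seq nat) : nat :=
  1 + \sum_(r <- oparts b) #|nt_embeddings q r|.

(* Main.v *)
Require Import Defs.
From mathcomp Require Import all_boot all_order all_algebra zify.
Lemma uniq_flatten_map (T U : eqType) (h : T -> seq U) (s : seq T) :
  uniq s -> (forall x, x \in s -> uniq (h x)) ->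
  (forall x y u, x \in s -> y \in s -> u \in h x -> u \in h y -> x = y) ->
  uniq (flatten (map h s)).
Proof.
elim: s => [|x s IH] //= /andP[xs us] uh dj.
rewrite cat_uniq uh ?mem_head // IH //; last first.
- by move=> a b u ha hb; apply: dj; rewrite inE ?ha ?hb orbT.
- by move=> a ha; apply: uh; rewrite inE ha orbT.
rewrite andbT; apply/hasPn => u /flatten_mapP[y ys uy]; apply/negP => ux.
have exy : x = y by apply: (dj x y u) => //; rewrite inE ?ys ?eqxx ?orbT.
by move: xs; rewrite exy ys.
Qed.

Lemma mem_nseqs n s t : (t \in nseqs n s) = (size t == n) && all (fun x => x \in s) t.
Proof.
elim: n t => [|n IH] t /=; first by case: t.
apply/flatten_mapP/idP.
- by case=> x xs /mapP[t' t'n ->] /=; rewrite xs eqSS andbCA /= -IH.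
- case: t => [|x t] //=; rewrite eqSS andbCA => /andP[xs H]; exists x => //.
  by apply/mapP; exists t; rewrite ?IH.
Qed.

Lemma uniq_nseqs n s : uniq s -> uniq (nseqs n s).
Proof.
move=> us; elim: n => [|n IH] //=.
apply: uniq_flatten_map => //.
- by move=> x _; rewrite map_inj_uniq // => a b [].
- by move=> x y u _ _ /mapP[a _ ->] /mapP[b _ [->]].
Qed.

Lemma uniq_bounded b : uniq (bounded_seqs b).
Proof.
apply: uniq_flatten_map; first exact: iota_uniq.
- by move=> x _; apply: uniq_nseqs; apply: iota_uniq.
- move=> x y u _ _; rewrite !mem_nseqs => /andP[/eqP <- _] /andP[/eqP <- _] //.
Qed.

Lemma uniq_oparts n : uniq (oparts n).
Proof. by apply: filter_uniq; apply: uniq_bounded. Qed.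

Lemma size_le_sumn r : all (fun x => 0 < x) r -> size r <= sumn r.
Proof. elim: r => //= x r IH /andP[hx hr]; have := IH hr; lia. Qed.

Lemma mem_le_sumn r x : x \in r -> x <= sumn r.
Proof.
elim: r => //= y r IH; rewrite inE => /orP[/eqP->|/IH]; lia.
Qed.

Lemma mem_oparts n r : (r \in oparts n) = is_opart n r.
Proof.
rewrite mem_filter; apply: andb_idr => /andP[pos /eqP sr].
rewrite /bounded_seqs; apply/flatten_mapP; exists (size r).
  by rewrite mem_iota add0n ltnS -sr size_le_sumn.
rewrite mem_nseqs eqxx /=; apply/allP => x xr.
by rewrite -[0 :: _]/(iota 0 n.+1) mem_iota add0n ltnS -sr mem_le_sumn.
Qed.

Definition decomp n := flatten [seq [seq (n.+1 - j) :: r | r <- oparts j] | j <- iota 0 n.+1].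

Lemma mem_decomp n r : (r \in decomp n) = is_opart n.+1 r.
Proof.
apply/flatten_mapP/idP.
- case=> j; rewrite mem_iota add0n => /= hj /mapP[r' hr' ->].
  move: hr'; rewrite mem_oparts /is_opart /= => /andP[-> /eqP ->].
  rewrite andbT subn_gt0 hj /=; apply/eqP; lia.
- case: r => [|x r]; first by rewrite /is_opart.
  rewrite /is_opart /= -andbA => /and3P[hx hr /eqP hs].
  exists (n.+1 - x); first by rewrite -[0 :: _]/(iota 0 n.+1) mem_iota add0n; lia.
  apply/mapP; exists r.
    by rewrite mem_oparts /is_opart hr /=; apply/eqP; lia.
  congr (_ :: _); lia.
Qed.

Lemma uniq_decomp n : uniq (decomp n).
Proof.
apply: uniq_flatten_map; first exact: iota_uniq.
- by move=> j _; rewrite map_inj_uniq ?uniq_oparts // => a b [].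
- move=> x y u; rewrite !mem_iota !add0n /= => hx hy.
  move=> /mapP[a _ ->] /mapP[b _ [e _]]; lia.
Qed.

Lemma sum_oparts0 (f : seq nat -> nat) : \sum_(r <- oparts 0) f r = f [::].
Proof. by rewrite /oparts /bounded_seqs /= big_cons big_nil addn0. Qed.

Lemma sum_opartsS n (f : seq nat -> nat) :
  \sum_(r <- oparts n.+1) f r = \sum_(j < n.+1) \sum_(r <- oparts j) f ((n.+1 - j) :: r).
Proof.
have pe : perm_eq (oparts n.+1) (decomp n).
  apply: uniq_perm; [exact: uniq_oparts | exact: uniq_decomp |].
  by move=> r; rewrite mem_oparts mem_decomp.
rewrite (perm_big _ pe) /decomp big_flatten big_map; symmetry.
rewrite -(big_mkord xpredT (fun j => \sum_(r <- oparts j) f (n.+1 - j :: r))) /index_iota subn0.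
by apply: eq_bigr => j _; rewrite big_map.
Qed.


Fixpoint embl (p r : seq nat) {struct r} : seq (seq nat) :=
  match p, r with
  | [::], _ => [:: [::]]
  | _ :: _, [::] => [::]
  | a :: p', x :: r' =>
      (if a <= x then [seq 0 :: map succn s | s <- embl p' r'] else [::])
      ++ [seq map succn s | s <- embl p r']
  end.

Definition Q (p r s : seq nat) :=
  [&& sorted ltn s, all (fun i => i < size r) s & all2 (fun a i => a <= nth 0 r i) p s].

Lemma all2_mapr (R : nat -> nat -> bool) (f : nat -> nat) (p s : seq nat) :
  all2 R p (map f s) = all2 (fun a i => R a (f i)) p s.
Proof. by elim: p s => [|a p IH] [|i s] //=; rewrite IH. Qed.

Lemma QS p x r s : Q p (x :: r) (map succn s) = Q p r s.
Proof.
rewrite /Q sorted_map all_map all2_mapr /=.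
by [].
Qed.

Lemma mapSK s : all (fun i => 0 < i) s -> map succn (map predn s) = s.
Proof. by elim: s => //= -[|i] s IH //= /IH ->. Qed.

Lemma mem_mapS (L : seq (seq nat)) s :
  (s \in [seq map succn t | t <- L]) = all (fun i => 0 < i) s && (map predn s \in L).
Proof.
apply/mapP/andP.
- case=> t tL ->; rewrite all_map -map_comp map_id_in ?tL //; split => //.
  exact/allP.
- by case=> pos sL; exists (map predn s); rewrite ?mapSK.
Qed.

Lemma mem_mapS0 (L : seq (seq nat)) s :
  (s \in [seq 0 :: map succn t | t <- L]) =
  if s is 0 :: s' then all (fun i => 0 < i) s' && (map predn s' \in L) else false.
Proof.
apply/mapP/idP.
- case=> t tL ->; rewrite all_map -map_comp map_id_in ?tL //; rewrite andbT.
  exact/allP.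
- case: s => [|[|i] s] // /andP[pos sL]; exists (map predn s); rewrite ?mapSK //.
Qed.

Lemma Qpos p x r s : all (fun i => 0 < i) s -> Q p (x :: r) s = Q p r (map predn s).
Proof. by move=> pos; rewrite -{1}(mapSK _ pos) QS. Qed.

Lemma mem_embl p r s : (s \in embl p r) = Q p r s.
Proof.
elim: r p s => [|x r IH] [|a p] s.
- by case: s => [|i s]; rewrite /Q /= ?andbF // inE.
- by case: s => [|i s]; rewrite /Q /= ?andbF // inE.
- by case: s => [|i s]; rewrite /Q /= ?andbF // inE.
rewrite /= mem_cat mem_mapS IH.
have -> : (s \in (if a <= x then [seq 0 :: map succn s0 | s0 <- embl p r] else [::]))
   = (a <= x) && (s \in [seq 0 :: map succn s0 | s0 <- embl p r]).
  by case: (a <= x).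
rewrite mem_mapS0.
case: s => [|[|i] s].
- by rewrite /Q /= !andbF.
- rewrite /= orbF IH.
  case pos: (all _ s); last first.
    by rewrite /Q /= (path_sortedE ltn_trans) pos andbF.
  rewrite -(Qpos p x r s pos) /Q /= (path_sortedE ltn_trans) pos /=.
  by case: (a <= x); case: (sorted ltn s); case: (all _ s); case: (all2 _ p s).
- rewrite /= andbF /=.
  case pos: (all (fun i => 0 < i) s); last first.
    rewrite /Q /= (path_sortedE ltn_trans).
    case al: (all (ltn i.+1) s) => //.
    suff : all (fun i => 0 < i) s by rewrite pos.
    by apply: sub_all al => j /= h; apply: leq_trans h.
  by rewrite [RHS](Qpos _ x) /= ?pos.
Qed.

Lemma uniq_embl p r : uniq (embl p r).
Proof.
elim: r p => [|x r IH] [|a p] //=.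
rewrite cat_uniq map_inj_uniq ?IH; last by move=> u v /(inj_map succn_inj).
rewrite andbT; apply/andP; split.
  case: (a <= x) => //; rewrite map_inj_uniq ?IH //.
  by move=> u v [/(inj_map succn_inj)].
apply/hasPn => u; rewrite mem_mapS => /andP[pos _].
case: (a <= x) => //; rewrite mem_mapS0.
by case: u pos => [|[|i] u].
Qed.

Definition e p r := size (embl p r).

Lemma e_nil r : e [::] r = 1.
Proof. by case: r. Qed.

Lemma e_cons_nil a p : e (a :: p) [::] = 0.
Proof. by []. Qed.

Lemma e_cons a p x r : e (a :: p) (x :: r) = (a <= x) * e p r + e (a :: p) r.
Proof. by rewrite /e /= size_cat; case: (a <= x); rewrite ?size_map /= ?mul1n ?mul0n. Qed.

Lemma all2_forall (R : nat -> nat -> bool) (p s : seq nat) : size p = size s ->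
  all2 R p s = [forall j : 'I_(size p), R (nth 0 p j) (nth 0 s j)].
Proof.
move=> hs; rewrite all2E hs eqxx /=.
apply/(all_nthP (0, 0))/forallP => H.
- move=> j; have hj : (j : nat) < size (zip p s) by rewrite size_zip hs minnn ltn_ord.
  by have := H j hj; rewrite nth_zip.
- move=> i; rewrite size_zip hs minnn => hi.
  by have := H (Ordinal hi); rewrite nth_zip.
Qed.

Lemma card_nt q r : #|nt_embeddings q r| = e (behead q) r.
Proof.
rewrite cardE /e.
set A := nt_embeddings q r.
rewrite -(size_map (fun t : (size (behead q)).-tuple 'I_(size r) => map val (val t))).
apply: perm_size; apply: uniq_perm.
- rewrite map_inj_uniq ?enum_uniq //.
  by move=> t1 t2 /(inj_map val_inj) /val_inj.
- exact: uniq_embl.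
move=> s; rewrite mem_embl; apply/mapP/idP.
- case=> t; rewrite mem_enum /A /nt_embeddings inE => /andP[so /forallP fa] ->.
  rewrite /Q so /= all_map; apply/andP; split.
    by apply/allP => i _ /=; rewrite ltn_ord.
  rewrite all2_forall ?size_map ?size_tuple //; apply/forallP => j.
  have := fa j; congr (_ <= nth 0 r _).
  by rewrite -tnth_map (tnth_nth 0).
- case/and3P => so sa s2.
  have hs : size s = size (behead q) by move: s2; rewrite all2E => /andP[/eqP -> _].
  pose u : seq 'I_(size r) := pmap insub s.
  have us : map val u = s.
    by rewrite (pmap_filter (@insubK _ _ _)); apply/all_filterP/allP => i /(allP sa) hi /=; case: insubP => //=; rewrite hi.
  have hu : size u == size (behead q) by rewrite -hs -us size_map.
  exists (Tuple hu) => //.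
  rewrite mem_enum /A /nt_embeddings inE /= us so /=.
  move: s2; rewrite all2_forall // => /forallP fa; apply/forallP => j.
  have := fa j; congr (_ <= nth 0 r _).
  have -> : nat_of_ord (tnth (Tuple hu) j) = nth 0 (map val (Tuple hu)) j.
    by rewrite -tnth_map (tnth_nth 0).
  by rewrite /= us.
Qed.

Definition F t m := if t is t'.+1 then 2 ^ t' * ('C(t'.+1 + m, m) + 'C(t' + m, t'.+1)) else 1.

Lemma F_SR t m : F t.+1 m.+1 = 2 * F t m.+1 + F t.+1 m.
Proof.
case: t => [|t] /=.
  rewrite !add0n !expn0 !mul1n muln1 addSn binSn bin1 -addnS binSn bin1; lia.
rewrite expnS -!mulnA -mulnDr; congr (_ * _).
have -> : t.+2 + m.+1 = (t + m).+3 by lia.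
have -> : t.+1 + m.+1 = (t + m).+2 by lia.
have -> : t.+1 + m = (t + m).+1 by lia.
have -> : t + m.+1 = (t + m).+1 by lia.
have -> : t.+2 + m = (t + m).+2 by lia.
have h1 := binS (t+m).+2 m.
have h2 := binS (t+m).+1 t.+1.
lia.
Qed.

Lemma F_rec0 N : 0 < N -> F N 0 = \sum_(j < N) F j 0.
Proof.
case: N => // t _; elim: t => [|t IH]; first by rewrite big_ord1.
rewrite big_ord_recr /= -IH /= !addn0 !bin0 (bin_small (ltnSn t.+1)) (bin_small (ltnSn t)).
by rewrite expnS; lia.
Qed.

Lemma F_rec1 t m : F t m.+1 = \sum_(i < t) F i m.+1 + \sum_(i < t.+1) F i m.
Proof.
elim: t => [|t IH]; first by rewrite big_ord0 big_ord1.
rewrite F_SR !big_ord_recr /=.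
move: IH; rewrite big_ord_recr /=; lia.
Qed.


Lemma L1 (g : nat -> nat) N c :
  \sum_(j < N) (if c <= j then g (j - c) else 0) = \sum_(i < N - c) g i.
Proof.
elim: N => [|N IH]; first by rewrite !big_ord0.
rewrite big_ord_recr /= IH.
case: (leqP c N) => h.
  have -> : N.+1 - c = (N - c).+1 by lia.
  by rewrite big_ord_recr.
have -> : N.+1 - c = 0 by lia.
have -> : N - c = 0 by lia.
by rewrite big_ord0.
Qed.

Lemma L2 N a (h : nat -> nat) : 0 < a ->
  \sum_(j < N) (a <= N - j) * h j = \sum_(j < N.+1 - a) h j.
Proof.
move=> ha; rewrite (big_ord_widen N h (_ : N.+1 - a <= N)); last by lia.
rewrite [RHS]big_mkcond /=; apply: eq_bigr => j _.
have -> : (a <= N - j) = (j < N.+1 - a) by apply/idP/idP => ?; lia.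
by case: (j < N.+1 - a); rewrite ?mul1n ?mul0n.
Qed.

Definition Ssum n p := \sum_(r <- oparts n) e p r.

Lemma S_formula n p : all (fun x => 0 < x) p ->
  Ssum n p = if sumn p <= n then F (n - sumn p) (size p) else 0.
Proof.
elim/ltn_ind: n p => n IH p pos.
case: n IH => [|n] IH.
  rewrite /Ssum sum_oparts0; case: p pos => [|a p] //= /andP[ha _].
  by rewrite e_cons_nil; case: ifP => //; lia.
rewrite /Ssum sum_opartsS.
case: p pos => [|a p] pos.
  have -> : (if sumn [::] <= n.+1 then F (n.+1 - sumn [::]) (size (@nil nat)) else 0) = F n.+1 0 by rewrite subn0.
  rewrite F_rec0 //; apply: eq_bigr => j _.
  have := IH j (ltn_ord j) [::] isT; rewrite /Ssum /= subn0 => <-.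
  by apply: eq_bigr => r _; rewrite !e_nil.
move: pos => /= /andP[ha pos].
have H1 : forall j : 'I_n.+1, \sum_(r <- oparts j) e (a :: p) (n.+1 - j :: r)
   = (a <= n.+1 - j) * (if sumn p <= j then F (j - sumn p) (size p) else 0)
     + (if a + sumn p <= j then F (j - (a + sumn p)) (size p).+1 else 0).
  move=> j; rewrite -(IH j (ltn_ord j) p pos) -(IH j (ltn_ord j) (a :: p)) /= ?ha ?pos //.
  rewrite /Ssum big_distrr /= -big_split /=; apply: eq_bigr => r _.
  by rewrite e_cons.
rewrite (eq_bigr _ (fun j _ => H1 j)) big_split /=.
rewrite (L2 _ _ (fun j => if sumn p <= j then F (j - sumn p) (size p) else 0) ha).
rewrite (L1 (fun i => F i (size p))) (L1 (fun i => F i (size p).+1)).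
case: leqP => hs.
  rewrite F_rec1 addnC.
  have -> : n.+2 - a - sumn p = (n.+1 - (a + sumn p)).+1 by lia.
  by [].
have -> : n.+2 - a - sumn p = 0 by lia.
have -> : n.+1 - (a + sumn p) = 0 by lia.
by rewrite !big_ord0.
Qed.

Lemma F_key t m : (t.+1 + m) * F t.+1 m = (t.+1 + 2 * m) * 'C(t.+1 + m, m) * 2 ^ t.
Proof.
rewrite /=.
have H : (t.+1 + m) * 'C(t + m, t.+1) = m * 'C(t.+1 + m, m).
  case: m => [|m]; first by rewrite !addn0 bin_small ?muln0 ?mul0n.
  have -> : 'C(t + m.+1, t.+1) = 'C((t.+1 + m.+1).-1, m).
    rewrite -bin_sub; last by lia.
    by f_equal; lia.
  by rewrite mul_bin_diag.
rewrite mulnCA mulnDr H; lia.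
Qed.


Import GRing.Theory Num.Theory.

Theorem lemma3 (b : nat) (q : seq nat) (hb : 1 <= b) (hq : is_opart b q) :
  ((num_embeddings b q)%:R : rat) =
  (1 + ((head 0%N q + 2 * size q - 2)%:R / (head 0%N q + size q - 1)%:R)
         * ('C(head 0%N q + size q - 1, size q - 1))%:R
         * (2 ^ (head 0%N q - 1))%:R)%R.
Proof.
move: hq; case: q => [|q1 p].
  by rewrite /is_opart /= => /eqP h; move: hb; rewrite -h.
rewrite /is_opart /= -andbA => /and3P[h1 pos /eqP hs].
rewrite /num_embeddings (eq_bigr _ (fun r _ => card_nt (q1 :: p) r)) /=.
have -> : \sum_(r <- oparts b) e p r = Ssum b p by [].
rewrite S_formula // (_ : sumn p <= b); last by lia.
case: q1 h1 hs => // t _ hs.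
have -> : b - sumn p = t.+1 by lia.
have -> : t.+1 + 2 * (size p).+1 - 2 = t.+1 + 2 * size p by lia.
have -> : t.+1 + (size p).+1 - 1 = t.+1 + size p by lia.
have -> : (size p).+1 - 1 = size p by lia.
have -> : t.+1 - 1 = t by lia.
have key := F_key t (size p).
have den0 : ((t.+1 + size p)%:R : rat) != 0%R by rewrite pnatr_eq0.
rewrite natrD; congr (_ + _)%R.
apply: (mulIf den0); rewrite -natrM mulnC key !natrM.
rewrite [RHS]mulrAC; congr (_ * _)%R; by rewrite mulrAC divfK.
Qed.
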